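(* Let $\Omega\subset\mathbb{R}^N$ be a bounded domain, $\delta>0$, and let $G$ be a domain with $\overline G\subset\Omega$, $\partial G\in C^1$, $G$ satisfying the interior sphere condition and $\partial G=\Gamma_\delta$. Then: (i) $\Omega=G+B_\delta(0)=\{x+y: x\in G,\ y\in B_\delta(0)\}$; (ii) for any unit vector $\xi$ and $\lambda\in\mathbb{R}$, if $\mathcal{R}_\lambda(G_\lambda)\subset G$ then $\mathcal{R}_\lambda(\Omega_\lambda)\subset\Omega$.
   Context: $d(x)=\min_{y\in\mathbb{R}^N\setminus\Omega}|x-y|$ and $\Gamma_\delta=\{x\in\Omega:d(x)=\delta\}$. For a unit vector $\xi$ and $\lambda\in\mathbb{R}$, $\mathcal{R}_\lambda x=x+2(\lambda-x\cdot\xi)\xi$ is the reflection in the hyperplane $\{x\cdot\xi=\lambda\}$, and $G_\lambda=\{x\in G: x\cdot\xi>\lambda\}$, $\Omega_\lambda=\{x\in\Omega: x\cdot\xi>\lambda\}$. *)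

(* Defs.v *)
From Stdlib Require Import Reals.
From Stdlib Require Fin.
Open Scope R_scope.

Definition vec (N : nat) : Type := Fin.t N -> R.

Fixpoint sumF (N : nat) : (Fin.t N -> R) -> R :=
  match N with
  | O => fun _ => 0
  | S n => fun f => f Fin.F1 + sumF n (fun i => f (Fin.FS i))
  end.

Definition vadd {N} (x y : vec N) : vec N := fun i => x i + y i.
Definition vsub {N} (x y : vec N) : vec N := fun i => x i - y i.
Definition vscale {N} (a : R) (x : vec N) : vec N := fun i => a * x i.
Definition dot {N} (x y : vec N) : R := sumF N (fun i => x i * y i).
Definition norm {N} (x : vec N) : R := sqrt (dot x x).
Definition dist {N} (x y : vec N) : R := norm (vsub x y).

Definition ball {N} (c : vec N) (r : R) : vec N -> Prop := fun x => dist x c < r.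

Definition is_open {N} (U : vec N -> Prop) : Prop :=
  forall x, U x -> exists r, 0 < r /\ forall y, ball x r y -> U y.

Definition is_connected {N} (A : vec N -> Prop) : Prop :=
  ~ (exists U V : vec N -> Prop,
        is_open U /\ is_open V /\
        (forall x, A x -> U x \/ V x) /\
        (exists x, A x /\ U x) /\ (exists x, A x /\ V x) /\
        (forall x, A x -> U x -> V x -> False)).

Definition is_domain {N} (A : vec N -> Prop) : Prop :=
  is_open A /\ (exists x, A x) /\ is_connected A.

Definition is_bounded {N} (A : vec N -> Prop) : Prop :=
  exists M, forall x, A x -> norm x <= M.

Definition closure {N} (A : vec N -> Prop) : vec N -> Prop :=
  fun x => forall eps, 0 < eps -> exists y, A y /\ dist x y < eps.

Definition boundary {N} (A : vec N -> Prop) : vec N -> Prop :=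
  fun x => closure A x /\ closure (fun y => ~ A y) x.

Definition continuous_on_v {N} (U : vec N -> Prop) (g : vec N -> vec N) : Prop :=
  forall x, U x -> forall eps, 0 < eps -> exists d, 0 < d /\
    forall y, U y -> dist y x < d -> dist (g y) (g x) < eps.

Definition C1_on {N} (U : vec N -> Prop) (rho : vec N -> R) (grad : vec N -> vec N)
  : Prop :=
  continuous_on_v U grad /\
  forall x, U x -> forall eps, 0 < eps -> exists d, 0 < d /\
    forall h, norm h < d ->
      Rabs (rho (vadd x h) - rho x - dot (grad x) h) <= eps * norm h.

Definition C1_boundary {N} (G : vec N -> Prop) : Prop :=
  forall p, boundary G p -> exists r rho grad,
    0 < r /\ C1_on (ball p r) rho grad /\
    (forall x, ball p r x -> rho x = 0 -> grad x <> (fun _ => 0)) /\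
    (forall x, ball p r x -> (G x <-> rho x < 0)).

Definition interior_sphere {N} (G : vec N -> Prop) : Prop :=
  forall p, boundary G p -> exists c r,
    0 < r /\ (forall x, ball c r x -> G x) /\ dist p c = r.

Definition dist_compl_eq {N} (Omega : vec N -> Prop) (x : vec N) (delta : R) : Prop :=
  (exists y, ~ Omega y /\ dist x y = delta) /\
  (forall y, ~ Omega y -> delta <= dist x y).

Definition Gamma {N} (Omega : vec N -> Prop) (delta : R) : vec N -> Prop :=
  fun x => Omega x /\ dist_compl_eq Omega x delta.

Definition refl {N} (xi : vec N) (lambda : R) (x : vec N) : vec N :=
  vadd x (vscale (2 * (lambda - dot x xi)) xi).

Definition cap_part {N} (A : vec N -> Prop) (xi : vec N) (lambda : R) : vec N -> Prop :=
  fun x => A x /\ dot x xi > lambda.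

(* Main.v *)
Require Import Defs.
From Stdlib Require Import Reals.
From Stdlib Require Import Lra Lia Psatz ZArith FunctionalExtensionality ClassicalEpsilon Classical.
From Stdlib Require Rtopology.
Require Import Defs.
Open Scope R_scope.


Lemma sumF_ext N (f g : Fin.t N -> R) : (forall i, f i = g i) -> sumF N f = sumF N g.
Proof. induction N; simpl; intros H; [reflexivity|]. rewrite H, (IHN (fun i => f (Fin.FS i)) (fun i => g (Fin.FS i))); auto. Qed.

Lemma sumF_lin3 N (f g h : Fin.t N -> R) a b c :
  sumF N (fun i => a * f i + b * g i + c * h i) = a * sumF N f + b * sumF N g + c * sumF N h.
Proof. induction N; simpl; [ring|]. rewrite IHN. ring. Qed.

Lemma sumF_nonneg N (f : Fin.t N -> R) : (forall i, 0 <= f i) -> 0 <= sumF N f.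
Proof. induction N; simpl; intros H; [lra|]. specialize (IHN (fun i => f (Fin.FS i))). pose proof (H Fin.F1). assert (0 <= sumF N (fun i => f (Fin.FS i))) by auto. lra. Qed.

Lemma sumF_zero N (f : Fin.t N -> R) : (forall i, 0 <= f i) -> sumF N f = 0 -> forall i, f i = 0.
Proof.
  induction N; intros H Hs i.
  - inversion i.
  - simpl in Hs. pose proof (H Fin.F1).
    assert (0 <= sumF N (fun i => f (Fin.FS i))) by (apply sumF_nonneg; auto).
    apply (Fin.caseS' i (fun i => f i = 0)).
    + lra.
    + intro j. apply (IHN (fun i => f (Fin.FS i))); auto. lra.
Qed.

Lemma dot_nonneg N (x : vec N) : 0 <= dot x x.
Proof. apply sumF_nonneg. intro; nra. Qed.

Lemma dot_sym N (x y : vec N) : dot x y = dot y x.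
Proof. apply sumF_ext. intro; ring. Qed.

Lemma dot_comb N (x y : vec N) a b :
  dot (fun i => a * x i + b * y i) (fun i => a * x i + b * y i)
  = a^2 * dot x x + 2*a*b * dot x y + b^2 * dot y y.
Proof.
  unfold dot. rewrite <- sumF_lin3. apply sumF_ext. intro; ring.
Qed.

Lemma dot_ext N (x y : vec N) : (forall i, x i = y i) -> dot x x = dot y y.
Proof. intro H; apply sumF_ext; intro i; rewrite H; auto. Qed.

Lemma norm_ext N (x y : vec N) : (forall i, x i = y i) -> norm x = norm y.
Proof. intro H; unfold norm; rewrite (dot_ext _ x y H); auto. Qed.

Lemma norm_nonneg N (x : vec N) : 0 <= norm x.
Proof. apply sqrt_pos. Qed.

Lemma norm_sq N (x : vec N) : norm x * norm x = dot x x.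
Proof. apply sqrt_sqrt, dot_nonneg. Qed.

Lemma CS N (x y : vec N) : dot x y <= norm x * norm y.
Proof.
  assert (Hq : forall t, 0 <= dot x x + 2*t*dot x y + t^2*dot y y).
  { intro t. pose proof (dot_comb N x y 1 t). pose proof (dot_nonneg N (fun i => 1 * x i + t * y i)). nra. }
  assert (Hsq : (dot x y)^2 <= dot x x * dot y y).
  { destruct (Req_dec (dot y y) 0) as [E|E].
    - destruct (Req_dec (dot x y) 0) as [E2|E2].
      + rewrite E2, E. pose proof (dot_nonneg N x). nra.
      + specialize (Hq (-(dot x x + 1)/(2*dot x y))). rewrite E in Hq.
        replace (dot x x + 2 * (- (dot x x + 1) / (2 * dot x y)) * dot x y +
          (- (dot x x + 1) / (2 * dot x y)) ^ 2 * 0) with (-1) in Hq by (field; auto). lra.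
    - pose proof (dot_nonneg N y).
      specialize (Hq (- dot x y / dot y y)).
      assert (Hq2 : 0 <= (dot x x * dot y y - dot x y ^2) / dot y y).
      { replace ((dot x x * dot y y - dot x y ^2) / dot y y) with
          (dot x x + 2 * (- dot x y / dot y y) * dot x y + (- dot x y / dot y y) ^ 2 * dot y y) by (field; auto). auto. }
      assert (0 < dot y y) by lra.
      apply Rmult_le_compat_r with (r := dot y y) in Hq2; [|lra].
      unfold Rdiv in Hq2. rewrite Rmult_assoc, Rinv_l, Rmult_1_r in Hq2; lra. }
  pose proof (norm_sq N x). pose proof (norm_sq N y).
  pose proof (norm_nonneg N x). pose proof (norm_nonneg N y).
  assert (Hp : 0 <= norm x * norm y) by nra.
  destruct (Rle_or_lt (dot x y) 0); [lra|].
  apply Rsqr_incr_0_var; [unfold Rsqr|auto]. nra.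
Qed.

Lemma norm_tri N (x y : vec N) : norm (fun i => x i + y i) <= norm x + norm y.
Proof.
  pose proof (CS N x y).
  pose proof (norm_sq N x). pose proof (norm_sq N y).
  pose proof (norm_nonneg N x). pose proof (norm_nonneg N y).
  pose proof (norm_sq N (fun i => x i + y i)). pose proof (norm_nonneg N (fun i => x i + y i)).
  assert (E : dot (fun i => x i + y i) (fun i => x i + y i) = dot x x + 2 * dot x y + dot y y).
  { transitivity (1^2 * dot x x + 2*1*1*dot x y + 1^2 * dot y y); [|ring].
    rewrite <- (dot_comb N x y 1 1). apply dot_ext. intro; ring. }
  apply Rsqr_incr_0_var; [unfold Rsqr|lra]. nra.
Qed.

Lemma norm_scale N (x : vec N) a : norm (fun i => a * x i) = Rabs a * norm x.
Proof.
  unfold norm. rewrite <- sqrt_Rsqr_abs, <- sqrt_mult_alt by apply Rle_0_sqr.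
  f_equal. transitivity (a^2 * dot x x + 2*a*0*dot x x + 0^2 * dot x x).
  - rewrite <- dot_comb. apply dot_ext; intro; ring.
  - unfold Rsqr; ring.
Qed.

Lemma dist_sym N (x y : vec N) : dist x y = dist y x.
Proof.
  unfold dist, vsub. rewrite <- (Rmult_1_l (norm (fun i => y i - x i))), <- Rabs_R1,
    <- (Rabs_Ropp 1), <- norm_scale. apply norm_ext; intro; ring.
Qed.

Lemma dist_refl N (x : vec N) : dist x x = 0.
Proof.
  unfold dist, vsub. rewrite <- (Rmult_0_l (norm x)), <- Rabs_R0, <- norm_scale.
  apply norm_ext; intro; ring.
Qed.

Lemma dist_tri N (x y z : vec N) : dist x z <= dist x y + dist y z.
Proof.
  unfold dist, vsub. eapply Rle_trans; [|apply norm_tri].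
  right. apply norm_ext; intro; ring.
Qed.

Lemma dist_nonneg N (x y : vec N) : 0 <= dist x y.
Proof. apply norm_nonneg. Qed.

Lemma inv_small eps : 0 < eps -> exists K, forall k, (K <= k)%nat -> / INR (S k) < eps.
Proof.
  intro He. destruct (archimed (/eps)) as [H1 _].
  assert (0 <= IZR (up (/eps))) by (pose proof (Rinv_0_lt_compat eps He); lra).
  exists (Z.to_nat (up (/eps))). intros k Hk.
  assert (Hk' : IZR (up (/ eps)) <= INR k).
  { rewrite <- (Z2Nat.id (up (/eps))) by (apply le_IZR; lra). rewrite <- INR_IZR_INZ. apply le_INR; auto. }
  rewrite S_INR. pose proof (pos_INR k).
  rewrite <- (Rinv_inv eps). apply Rinv_lt_contravar; [|lra].
  apply Rmult_lt_0_compat; [apply Rinv_0_lt_compat|]; lra.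
Qed.

Lemma phi_ge (phi : nat -> nat) : (forall k, (phi k < phi (S k))%nat) -> forall k, (k <= phi k)%nat.
Proof. intros H k; induction k; [lia|]. specialize (H k). lia. Qed.

Lemma BW1 (a : nat -> R) M : (forall n, Rabs (a n) <= M) ->
  exists (phi : nat -> nat) l, (forall k, (phi k < phi (S k))%nat) /\
    forall k, Rabs (a (phi k) - l) < / INR (S k).
Proof.
  intro HM.
  destruct (Rtopology.Bolzano_Weierstrass a (fun c => -M <= c <= M) (Rtopology.compact_P3 _ _))
    as [l Hl].
  { intro n; specialize (HM n). revert HM; unfold Rabs; destruct (Rcase_abs (a n)); intros; lra. }
  assert (Hp : forall n0 k, exists p, (n0 <= p)%nat /\ Rabs (a p - l) < / INR (S k)).
  { intros n0 k.
    assert (Hpos : 0 < / INR (S k)) by (apply Rinv_0_lt_compat, lt_0_INR; lia).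
    destruct (Hl (Rtopology.disc l (mkposreal _ Hpos)) n0) as [p [Hp1 Hp2]].
    - exists (mkposreal _ Hpos). intros y Hy; exact Hy.
    - exists p. split; auto. }
  assert (Hpick : exists pick : nat -> nat -> nat, forall n0 k, (n0 <= pick n0 k)%nat /\ Rabs (a (pick n0 k) - l) < / INR (S k)).
  { exists (fun n0 k => proj1_sig (constructive_indefinite_description _ (Hp n0 k))).
    intros n0 k. exact (proj2_sig (constructive_indefinite_description _ (Hp n0 k))). }
  destruct Hpick as [pick Hpick].
  set (phi := fix phi k := match k with O => pick O O | S k => pick (S (phi k)) (S k) end).
  exists phi, l. split.
  - intro k. simpl. destruct (Hpick (S (phi k)) (S k)). lia.
  - intro k. destruct k; simpl; apply Hpick.
Qed.

Lemma sqrt_sum_le a b : 0 <= b -> sqrt (a * a + b) <= Rabs a + sqrt b.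
Proof.
  intro Hb. pose proof (sqrt_pos b). pose proof (Rabs_pos a).
  apply Rsqr_incr_0_var; [|nra]. unfold Rsqr.
  rewrite sqrt_sqrt by nra.
  pose proof (sqrt_sqrt b Hb). pose proof (Rsqr_abs a). unfold Rsqr in H2. nra.
Qed.

Lemma BW N (u : nat -> vec N) M : (forall n, norm (u n) <= M) ->
  exists (phi : nat -> nat) (l : vec N), (forall k, (phi k < phi (S k))%nat) /\
    forall eps, 0 < eps -> exists K, forall k, (K <= k)%nat -> dist (u (phi k)) l < eps.
Proof.
  revert u M. induction N; intros u M HM.
  - exists (fun k => k), (fun _ => 0). split; [intro; lia|].
    intros eps He. exists O. intros. unfold dist, norm, dot. simpl. rewrite sqrt_0. auto.
  - destruct (BW1 (fun k => u k Fin.F1) M) as [phi1 [l1 [Hphi1 Hl1]]].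
    { intro n. eapply Rle_trans; [|apply (HM n)]. unfold norm, dot. simpl.
      rewrite <- sqrt_Rsqr_abs. apply sqrt_le_1_alt. unfold Rsqr.
      pose proof (sumF_nonneg N (fun i => u n (Fin.FS i) * u n (Fin.FS i)) ltac:(intro; nra)). lra. }
    destruct (IHN (fun k i => u (phi1 k) (Fin.FS i)) M) as [phi2 [l2 [Hphi2 Hl2]]].
    { intro n. eapply Rle_trans; [|apply (HM (phi1 n))]. unfold norm, dot. simpl.
      apply sqrt_le_1_alt. pose proof (Rle_0_sqr (u (phi1 n) Fin.F1)). unfold Rsqr in H. lra. }
    exists (fun k => phi1 (phi2 k)), (fun i => Fin.caseS' i (fun _ => R) l1 l2). split.
    { intro k. assert (forall a b, (a < b)%nat -> (phi1 a < phi1 b)%nat).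
      { intros a b Hab. induction Hab; [apply Hphi1|]. specialize (Hphi1 m). lia. }
      apply H, Hphi2. }
    intros eps He.
    destruct (inv_small (eps/2)) as [K1 HK1]; [lra|].
    destruct (Hl2 (eps/2)) as [K2 HK2]; [lra|].
    exists (max K1 K2). intros k Hk.
    unfold dist, norm, dot, vsub. simpl.
    eapply Rle_lt_trans; [apply sqrt_sum_le; apply sumF_nonneg; intro; apply Rle_0_sqr|].
    specialize (HK2 k ltac:(lia)). unfold dist, norm, dot, vsub in HK2.
    pose proof (phi_ge phi2 Hphi2 k).
    specialize (HK1 (phi2 k) ltac:(lia)). specialize (Hl1 (phi2 k)).
    pose proof (Rplus_lt_compat _ _ _ _ (Rlt_trans _ _ _ Hl1 HK1) HK2) as Hs.
    eapply Rlt_le_trans; [exact Hs|lra].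
Qed.


Lemma dist_seg N (g w : vec N) a b :
  dist (fun i => g i + a * (w i - g i)) (fun i => g i + b * (w i - g i)) = Rabs (a - b) * dist w g.
Proof. unfold dist, vsub. rewrite <- norm_scale. apply norm_ext; intro; ring. Qed.

Lemma easy N (Omega G : vec N -> Prop) delta :
  is_open G -> (forall x, closure G x -> Omega x) -> (forall x, boundary G x -> Gamma Omega delta x) ->
  forall g w, G g -> dist w g < delta -> Omega w.
Proof.
  intros HGo HGcl HB g w Hg Hwg. apply NNPP; intro Hw.
  pose (seg := fun t : R => (fun i => g i + t * (w i - g i)) : vec N).
  assert (seg0 : seg 0 = g) by (apply functional_extensionality; intro; unfold seg; ring).
  assert (seg1 : seg 1 = w) by (apply functional_extensionality; intro; unfold seg; ring).
  pose (L := dist w g). assert (HL : 0 <= L) by apply dist_nonneg.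
  pose (T := fun t => 0 <= t <= 1 /\ forall s, 0 <= s <= t -> G (seg s)).
  assert (T0 : T 0). { split; [lra|]. intros s Hs. replace s with 0 by lra. rewrite seg0; auto. }
  destruct (completeness T) as [ts [Hub Hlub]].
  { exists 1. intros t [Ht _]. lra. }
  { exists 0; auto. }
  assert (Hts0 : 0 <= ts) by (apply Hub; auto).
  assert (Hts1 : ts <= 1) by (apply Hlub; intros t [Ht _]; lra).
  assert (Hlt : forall s, 0 <= s < ts -> G (seg s)).
  { intros s Hs. apply NNPP; intro Hn.
    assert (ts <= s); [|lra]. apply Hlub. intros t [Ht1 Ht2].
    destruct (Rle_or_lt t s); auto. exfalso. apply Hn, Ht2. lra. }
  assert (HnG : ~ G (seg ts)).
  { intro Hp. destruct (HGo _ Hp) as [r [Hr Hball]].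
    assert (Hts1' : ts < 1).
    { destruct (Rle_lt_or_eq_dec _ _ Hts1) as [?|E]; auto. rewrite E, seg1 in Hp.
      exfalso; apply Hw, HGcl. intros e He; exists w; split; auto. rewrite dist_refl; auto. }
    pose (eta := Rmin (1 - ts) (r / (L+1)) / 2).
    assert (Heta : 0 < eta) by (unfold eta; pose proof (Rmin_pos (1-ts) (r/(L+1)) ltac:(lra) ltac:(apply Rdiv_lt_0_compat; lra)); lra).
    assert (Heta1 : eta <= (1 - ts)/2) by (unfold eta; pose proof (Rmin_l (1-ts) (r/(L+1))); lra).
    assert (Heta2 : eta * (L + 1) <= r / 2).
    { unfold eta. pose proof (Rmin_r (1-ts) (r/(L+1))).
      replace (r/2) with (r / (L+1) / 2 * (L+1)) by (field; lra).
      apply Rmult_le_compat_r; lra. }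
    assert (ts + eta <= ts); [|lra].
    apply Hub. split; [lra|]. intros s Hs.
    destruct (Rlt_or_le s ts); [apply Hlt; lra|].
    apply Hball. unfold ball. unfold seg. rewrite dist_seg. fold L.
    rewrite Rabs_right by lra. nra. }
  assert (Htspos : 0 < ts).
  { destruct (Rle_lt_or_eq_dec _ _ Hts0) as [?|E]; auto. rewrite <- E, seg0 in HnG. contradiction. }
  assert (Hbd : boundary G (seg ts)).
  { split.
    - intros eps He.
      pose (m := Rmin ts (eps/(L+1)) / 2).
      assert (Hm : 0 < m) by (unfold m; pose proof (Rmin_pos ts (eps/(L+1)) Htspos ltac:(apply Rdiv_lt_0_compat; lra)); lra).
      assert (Hm1 : m <= ts / 2) by (unfold m; pose proof (Rmin_l ts (eps/(L+1))); lra).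
      assert (Hm2 : m * (L + 1) <= eps / 2).
      { unfold m. pose proof (Rmin_r ts (eps/(L+1))).
        replace (eps/2) with (eps / (L+1) / 2 * (L+1)) by (field; lra).
        apply Rmult_le_compat_r; lra. }
      exists (seg (ts - m)). split; [apply Hlt; lra|].
      unfold seg. rewrite dist_seg. fold L. replace (ts - (ts - m)) with m by ring. rewrite Rabs_right by lra. nra.
    - intros eps He. exists (seg ts). split; auto. rewrite dist_refl; auto. }
  destruct (HB _ Hbd) as [_ [_ Hmin]].
  specialize (Hmin w Hw). rewrite <- seg1 in Hmin. unfold seg in Hmin.
  rewrite dist_seg in Hmin. fold L in Hmin. rewrite Rabs_left1 in Hmin by lra.
  fold L in Hwg. nra.
Qed.

Lemma dot_ext_neg N (x y : vec N) : (forall i, x i = - y i) -> dot x x = dot y y.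
Proof. intro H; apply sumF_ext; intro i; rewrite H; ring. Qed.

Lemma dot_lt_dist N (a b : vec N) K : 0 <= K -> dot (vsub a b) (vsub a b) < K * K -> dist a b < K.
Proof. intros HK H. unfold dist, norm. rewrite <- (sqrt_square K HK). apply sqrt_lt_1_alt. split; auto. apply dot_nonneg. Qed.

Lemma dist_sq N (a b : vec N) : dist a b * dist a b = dot (vsub a b) (vsub a b).
Proof. apply norm_sq. Qed.

Lemma enlarge N (c w : vec N) r d : 0 < r -> 0 < d -> dist w c < r + d ->
  exists g, dist g c < r /\ dist w g < d.
Proof.
  intros Hr Hd Hw. pose (D := dist w c).
  destruct (Rlt_or_le D r) as [HD|HD].
  { exists w. rewrite dist_refl. split; auto. }
  pose (m := Rmax (D - d) 0). pose (al := (r + m) / (2 * D)).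
  assert (Hm1 : D - d <= m) by apply Rmax_l. assert (Hm2 : 0 <= m) by apply Rmax_r.
  assert (Hm3 : m < r) by (unfold m; apply Rmax_lub_lt; fold D in Hw; lra).
  assert (Hal : al * D = (r + m)/2) by (unfold al; field; lra).
  assert (Hal0 : 0 <= al) by (unfold al; apply Rmult_le_pos; [lra|left; apply Rinv_0_lt_compat; lra]).
  exists (fun i => c i + al * (w i - c i)). split.
  - replace (dist (fun i => c i + al * (w i - c i)) c) with (Rabs al * D).
    + rewrite Rabs_right by lra. lra.
    + unfold D, dist, vsub. rewrite <- norm_scale. apply norm_ext; intro; ring.
  - replace (dist w (fun i => c i + al * (w i - c i))) with (Rabs (1 - al) * D).
    + assert (al * D <= D) by lra.
      destruct (Rle_or_lt 0 (1 - al)).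
      * rewrite Rabs_right by lra. lra.
      * rewrite Rabs_left by lra. nra.
    + unfold D, dist, vsub. rewrite <- norm_scale. apply norm_ext; intro; ring.
Qed.

Lemma dot_zero_eq N (y : vec N) : dot y y <= 0 -> forall i, y i = 0.
Proof.
  intros H i. pose proof (dot_nonneg N y).
  assert (E : dot y y = 0) by lra.
  pose proof (sumF_zero N (fun i => y i * y i) ltac:(intro; apply Rle_0_sqr) E i). simpl in H1. nra.
Qed.

Lemma key N (Omega G : vec N -> Prop) d
  (Heasy : forall g w, G g -> dist w g < d -> Omega w) p c r z x :
  0 < r -> 0 < d -> (forall y, ball c r y -> G y) -> dist p c = r ->
  ~ Omega z -> dist p z = d -> Omega x -> dist x p = d -> exists g, G g /\ dist x g < d.
Proof.
  intros Hr Hd Hball Hpc Hz Hpz Hx Hxp.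
  pose (u := vsub p c). pose (w := vsub z p). pose (v := vsub x p).
  assert (Huu : dot u u = r * r) by (rewrite <- Hpc; symmetry; apply dist_sq).
  assert (Hww : dot w w = d * d).
  { rewrite <- Hpz, dist_sq. apply dot_ext_neg. intro; unfold w, vsub; ring. }
  assert (Hvv : dot v v = d * d) by (rewrite <- Hxp; symmetry; apply dist_sq).
  assert (C1 : r * d <= dot w u).
  { apply Rnot_lt_le. intro Hlt. apply Hz.
    destruct (enlarge N c z r d Hr Hd) as [g [Hg1 Hg2]].
    - apply dot_lt_dist; [lra|].
      replace (dot (vsub z c) (vsub z c)) with (1^2 * dot w w + 2*1*1*dot w u + 1^2 * dot u u).
      + nra.
      + rewrite <- dot_comb. apply dot_ext. intro; unfold u, w, vsub; ring.
    - apply (Heasy g); [apply Hball; exact Hg1|exact Hg2]. }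
  assert (C2 : dot v u < r * d).
  { apply Rnot_le_lt. intro Hge. apply Hz.
    assert (E1 : forall i, d * u i + (- r) * v i = 0).
    { apply dot_zero_eq. rewrite dot_comb, (dot_sym _ u v), Huu, Hvv.
      assert (0 <= (d*r)*(dot v u - r*d)) by (apply Rmult_le_pos; nra). nra. }
    assert (E2 : forall i, d * u i + (- r) * w i = 0).
    { apply dot_zero_eq. rewrite dot_comb, (dot_sym _ u w), Huu, Hww.
      assert (0 <= (d*r)*(dot w u - r*d)) by (apply Rmult_le_pos; nra). nra. }
    replace z with x; auto. apply functional_extensionality. intro i.
    specialize (E1 i). specialize (E2 i). unfold u, v, w, vsub in *.
    apply Rmult_eq_reg_l with r; [|lra]. nra. }
  destruct (enlarge N c x r d Hr Hd) as [g [Hg1 Hg2]].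
  - apply dot_lt_dist; [lra|].
    replace (dot (vsub x c) (vsub x c)) with (1^2 * dot v v + 2*1*1*dot v u + 1^2 * dot u u).
    + nra.
    + rewrite <- dot_comb. apply dot_ext. intro; unfold u, v, vsub; ring.
  - exists g. split; auto.
Qed.


Lemma dot_sub_l N (x g xi : vec N) : dot (vsub x g) xi = dot x xi - dot g xi.
Proof.
  unfold dot. transitivity (1 * sumF N (fun i => x i * xi i) + (-1) * sumF N (fun i => g i * xi i) + 0 * sumF N (fun i => g i * xi i)); [|ring].
  rewrite <- sumF_lin3. apply sumF_ext. intro; unfold vsub; ring.
Qed.

Lemma refl_dist N (xi : vec N) lam x g : norm xi = 1 ->
  dist (refl xi lam x) (refl xi lam g) = dist x g.
Proof.
  intro Hxi. assert (Hxx : dot xi xi = 1) by (rewrite <- norm_sq, Hxi; ring).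
  unfold dist, norm. f_equal.
  pose (a := dot (vsub x g) xi). pose (t := -2 * a).
  transitivity (1^2 * dot (vsub x g) (vsub x g) + 2*1*t*a + t^2 * dot xi xi).
  - unfold a. rewrite <- dot_comb. apply dot_ext. intro i. unfold t, a. rewrite dot_sub_l. unfold refl, vadd, vsub, vscale. ring.
  - rewrite Hxx. unfold t. ring.
Qed.

Lemma refl_dist2 N (xi : vec N) lam x g : norm xi = 1 ->
  dot x xi > lam -> dot g xi <= lam ->
  dist (refl xi lam x) g <= dist x g.
Proof.
  intros Hxi H1 H2. assert (Hxx : dot xi xi = 1) by (rewrite <- norm_sq, Hxi; ring).
  unfold dist, norm. apply sqrt_le_1_alt.
  pose (a := dot (vsub x g) xi). pose (t := 2 * (lam - dot x xi)).
  transitivity (1^2 * dot (vsub x g) (vsub x g) + 2*1*t*a + t^2 * dot xi xi).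
  - right. unfold a. rewrite <- dot_comb. apply dot_ext. intro i. unfold t, refl, vadd, vsub, vscale. ring.
  - rewrite Hxx. unfold a, t. rewrite (dot_sub_l N x g xi).
    assert (0 <= (dot x xi - lam) * (lam - dot g xi)) by (apply Rmult_le_pos; lra).
    match goal with |- ?L <= ?D => replace L with (D - 4 * ((dot x xi - lam) * (lam - dot g xi))) by ring end. lra.
Qed.

Lemma hard N (Omega G : vec N -> Prop) delta :
  is_bounded Omega -> 0 < delta -> is_open G -> (forall x, closure G x -> Omega x) ->
  interior_sphere G -> (forall x, boundary G x -> Gamma Omega delta x) ->
  forall y, Omega y -> ~ (exists g, G g /\ dist y g < delta) ->
  exists e, 0 < e /\ forall z, ball y e z -> ~ (exists g, G g /\ dist z g < delta).
Proof.
  intros [M HM] Hd HGo HGcl HIS HB y Hy HnS.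
  assert (Heasy := easy N Omega G delta HGo HGcl HB).
  assert (HGO : forall x, G x -> Omega x).
  { intros x Hx. apply HGcl. intros e He. exists x. rewrite dist_refl. auto. }
  apply NNPP; intro HnV.
  assert (Hn : forall n, exists g, G g /\ dist y g < delta + / INR (S n)).
  { intro n. assert (Hpos : 0 < / INR (S n)) by (apply Rinv_0_lt_compat, lt_0_INR; lia).
    apply NNPP; intro Hc. apply HnV. exists (/ INR (S n)). split; auto.
    intros z Hz [g [Hg Hzg]]. apply Hc. exists g. split; auto.
    pose proof (dist_tri N y z g). rewrite (dist_sym N y z) in H. unfold ball in Hz. lra. }
  pose (gs := fun n => proj1_sig (constructive_indefinite_description _ (Hn n))).
  assert (Hgs : forall n, G (gs n) /\ dist y (gs n) < delta + / INR (S n)).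
  { intro n. exact (proj2_sig (constructive_indefinite_description _ (Hn n))). }
  destruct (BW N gs M) as [phi [l [Hphi Hl]]].
  { intro n. apply HM, HGO, Hgs. }
  assert (Hlcl : closure G l).
  { intros e He. destruct (Hl e He) as [K HK]. exists (gs (phi K)). split; [apply Hgs|].
    rewrite dist_sym. apply HK. lia. }
  assert (Hyl : dist y l <= delta).
  { apply Rnot_lt_le. intro Hlt.
    pose (e := dist y l - delta).
    destruct (Hl (e/2)) as [K1 HK1]; [unfold e; lra|].
    destruct (inv_small (e/2)) as [K2 HK2]; [unfold e; lra|].
    pose (k := max K1 K2).
    specialize (HK1 k ltac:(unfold k; lia)).
    pose proof (phi_ge phi Hphi k).
    specialize (HK2 (phi k) ltac:(unfold k in *; lia)).
    destruct (Hgs (phi k)) as [_ H2].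
    pose proof (dist_tri N y (gs (phi k)) l). unfold e in *. lra. }
  destruct (Rle_lt_or_eq_dec _ _ Hyl) as [Hlt|Heq].
  { destruct (Hlcl (delta - dist y l)) as [g [Hg Hlg]]; [lra|].
    apply HnS. exists g. split; auto. pose proof (dist_tri N y l g). lra. }
  destruct (classic (G l)) as [HGl|HnGl].
  - destruct (HGo l HGl) as [r [Hr Hball]].
    pose (s := Rmin (1/2) (r / (delta + 1))).
    assert (Hs0 : 0 < s) by (apply Rmin_pos; [lra|apply Rdiv_lt_0_compat; lra]).
    assert (Hs1 : s <= 1/2) by apply Rmin_l.
    assert (Hs2 : s * (delta + 1) <= r).
    { pose proof (Rmin_r (1/2) (r/(delta+1))). fold s in H.
      replace r with (r / (delta+1) * (delta+1)) by (field; lra).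
      apply Rmult_le_compat_r; lra. }
    apply HnS. exists (fun i => l i + s * (y i - l i)). split.
    + apply Hball. unfold ball.
      replace (dist (fun i => l i + s * (y i - l i)) l) with (Rabs s * dist y l).
      * rewrite Rabs_right by lra. nra.
      * unfold dist, vsub. rewrite <- norm_scale. apply norm_ext; intro; ring.
    + replace (dist y (fun i => l i + s * (y i - l i))) with (Rabs (1 - s) * dist y l).
      * rewrite Rabs_right by lra. nra.
      * unfold dist, vsub. rewrite <- norm_scale. apply norm_ext; intro; ring.
  - assert (Hbd : boundary G l).
    { split; auto. intros e He. exists l. rewrite dist_refl. auto. }
    destruct (HB l Hbd) as [_ [[z [Hz Hlz]] _]].
    destruct (HIS l Hbd) as [c [r [Hr [Hball Hlc]]]].
    apply HnS. eapply (key N Omega G delta Heasy l c r z y); eauto.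
Qed.

Theorem lemma2p8 (N : nat) (Omega G : vec N -> Prop) (delta : R) :
  is_domain Omega -> is_bounded Omega -> 0 < delta ->
  is_domain G -> (forall x, closure G x -> Omega x) ->
  C1_boundary G -> interior_sphere G ->
  (forall x, boundary G x <-> Gamma Omega delta x) ->
  (forall x, Omega x <->
     exists g y, G g /\ ball (fun _ => 0) delta y /\ x = vadd g y)
  /\
  (forall (xi : vec N) (lambda : R), norm xi = 1 ->
     (forall x, cap_part G xi lambda x -> G (refl xi lambda x)) ->
     (forall x, cap_part Omega xi lambda x -> Omega (refl xi lambda x))).
Proof.
  intros [HOo [_ HOc]] HObd Hd [HGo [[g0 Hg0] _]] HGcl _ HIS HGam.
  assert (HB : forall x, boundary G x -> Gamma Omega delta x) by (intros; apply HGam; auto).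
  assert (Heasy := easy N Omega G delta HGo HGcl HB).
  assert (HGO : forall x, G x -> Omega x).
  { intros x Hx. apply HGcl. intros e He. exists x. rewrite dist_refl. auto. }
  pose (S := fun x => exists g, G g /\ dist x g < delta).
  pose (V := fun x => exists e, 0 < e /\ forall z, ball x e z -> ~ S z).
  assert (HV : forall y, Omega y -> ~ S y -> V y).
  { intros y Hy HnS. exact (hard N Omega G delta HObd Hd HGo HGcl HIS HB y Hy HnS). }
  assert (Hsub : forall x, Omega x -> S x).
  { intros x Hx. apply NNPP; intro HnS. apply HOc.
    exists S, V. split; [|split; [|split; [|split; [|split]]]].
    - intros y [g [Hg Hyg]]. exists (delta - dist y g). split; [lra|].
      intros z Hz. exists g. split; auto. pose proof (dist_tri N z y g). unfold ball in Hz. lra.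
    - intros y [e [He Hball]]. exists e. split; auto. intros z Hz.
      exists (e - dist z y). split; [unfold ball in Hz; lra|].
      intros w Hw. apply Hball. unfold ball in *. pose proof (dist_tri N w z y). lra.
    - intros y Hy. destruct (classic (S y)); auto.
    - exists g0. split; auto. exists g0. split; auto. rewrite dist_refl; auto.
    - exists x. split; auto.
    - intros y _ HSy [e [He Hball]]. apply (Hball y); auto. unfold ball. rewrite dist_refl; auto. }
  split.
  - intro x. split.
    + intro Hx. destruct (Hsub x Hx) as [g [Hg Hxg]].
      exists g, (vsub x g). split; auto. split.
      * unfold ball. replace (dist (vsub x g) (fun _ => 0)) with (dist x g); auto.
        unfold dist. apply norm_ext. intro; unfold vsub; ring.
      * apply functional_extensionality; intro; unfold vadd, vsub; ring.
    + intros [g [y [Hg [Hy ->]]]]. apply (Heasy g); auto.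
      unfold ball in Hy. replace (dist (vadd g y) g) with (dist y (fun _ => 0)); auto.
      unfold dist. apply norm_ext. intro; unfold vadd, vsub; ring.
  - intros xi lam Hxi HR x [Hx Hxl].
    destruct (Hsub x Hx) as [g [Hg Hxg]].
    destruct (Rlt_or_le lam (dot g xi)) as [Hgl|Hgl].
    + apply (Heasy (refl xi lam g)).
      * apply HR. split; auto.
      * rewrite refl_dist; auto.
    + apply (Heasy g); auto. eapply Rle_lt_trans; [apply refl_dist2|]; eauto.
Qed.
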